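(* Let $C$ be a hyperelliptic curve of genus $3$ over $\mathbb{C}$ given by $y^2=f(x)$ with $f$ a separable polynomial of degree $8$. Denote by $\alpha_1,\dots,\alpha_8$ the roots of $f$ and by $R_i=(\alpha_i,0)$ the corresponding branch points; for $w\in\mathbb{C}$ with $f(w)\neq 0$ let $P_1^w,P_2^w$ be the two points of $C$ over $x=w$. Then: (1) For $q=1$ and any $\beta\in\mathbb{C}$, the set $B_{1,\beta}=\left\{\frac{(x-\beta)^j}{y}\,dx : 0\le j\le 2\right\}$ is a basis of $H^0(C,(\Omega^1)^1)$. (2) For $q=2$, any $\beta\in\mathbb{C}$ and $m\in\{1,2\}$, the set $B_{2,\beta}=\left\{\frac{(x-\beta)^j}{y^2}(dx)^2 : 0\le j\le 4\right\}\cup\left\{\frac{y-f_{\beta,4,m}(x)}{y^2}(dx)^2\right\}$ is a basis of $H^0(C,(\Omega^1)^2)$, where $f_{\beta,4,m}(x)=0$ if $\beta$ is a root of $f$, and if $\beta=w$ is not a root of $f$ then $f_{w,4,m}(x)$ is the degree-$4$ Taylor polynomial at $x=w$ of the local branch of $y$ (as a function of $x$) through $P_m^w$. (3) For every $q\ge 2$ and every root $\beta$ of $f$, the set $B_{q,\beta}=\left\{\frac{(x-\beta)^j}{y^q}(dx)^q : 0\le j\le 2q\right\}\cup\left\{\frac{(x-\beta)^j y}{y^q}(dx)^q : 0\le j\le 2q-4\right\}$ is a basis of $H^0(C,(\Omega^1)^q)$.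
   Context: $H^0(C,(\Omega^1)^q)$ denotes the complex vector space of holomorphic $q$-differentials on the (smooth projective model of the) curve $C$; for genus $3$ its dimension is $3$ if $q=1$ and $2(2q-1)$ if $q\ge 2$. *)

(* Defs.v *)
From HB Require Import structures.
From mathcomp Require Import all_boot all_order all_algebra all_field.
From mathcomp Require Import fraction complex.
From mathcomp Require Import Rstruct.
From Stdlib Require Import Reals.

Set Implicit Arguments.
Unset Strict Implicit.
Unset Printing Implicit Defensive.

Import GRing.Theory.
Local Open Scope ring_scope.

Definition CC : closedFieldType := complex Rdefinitions.R.

Definition RF := {fraction {poly CC}}.
Definition rf (p : {poly CC}) : RF := tofrac p.
Definition rfc (c : CC) : RF := tofrac (c%:P).
Definition rfx : RF := tofrac 'X.

(* The function field C(C) = C(x)[y]/(y^2 - f).  Since f is not a square,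
   every element is uniquely A + B y with A, B in C(x); we represent it by
   the pair (A, B). *)
Definition FF := (RF * RF)%type.

Definition ffadd (g h : FF) : FF := (g.1 + h.1, g.2 + h.2).
Definition ffmul (f : {poly CC}) (g h : FF) : FF :=
  (g.1 * h.1 + g.2 * h.2 * rf f, g.1 * h.2 + g.2 * h.1).
(* (A + B y)^-1 = (A - B y) / (A^2 - B^2 f) *)
Definition ffinv (f : {poly CC}) (g : FF) : FF :=
  let n := g.1 ^+ 2 - g.2 ^+ 2 * rf f in (g.1 / n, - g.2 / n).
Definition ffexp (f : {poly CC}) (g : FF) (n : nat) : FF :=
  iter n (ffmul f g) (1, 0).
Definition ffX (A : RF) : FF := (A, 0).
Definition ffy : FF := (0, 1).
Definition ffpoly (p : {poly CC}) : FF := ffX (rf p).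

(* The affine curve y^2 = f is smooth
   (f separable), so the local ring at (a, b) is the localisation of
   C[x, y]/(y^2 - f) at the maximal ideal of (a, b):
   g is regular at (a,b) iff g = U/V with U, V polynomial in x, y and
   V(a, b) <> 0. *)
Definition regular_aff (f : {poly CC}) (a b : CC) (g : FF) : Prop :=
  exists U0 U1 V0 V1 : {poly CC},
    V0.[a] + V1.[a] * b != 0 /\
    ffmul f g (rf V0, rf V1) = (rf U0, rf U1).

Definition evinvx (p : {poly CC}) : RF :=
  \sum_(i < size p) rfc p`_i / rfx ^+ i.

(* Chart at infinity: u = 1/x, v = y/x^4, with v^2 = u^8 f(1/u), a smooth
   affine curve near u = 0 (the leading coefficient of f is non zero).
   The two points at infinity are (u, v) = (0, c) with c^2 = lead_coef f.
   g is regular at (0, c) iff g = U(u,v)/V(u,v) with V(0, c) <> 0. *)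
Definition uv_elt (V0 V1 : {poly CC}) : FF :=
  (evinvx V0, evinvx V1 / rfx ^+ 4).
Definition regular_inf (f : {poly CC}) (c : CC) (g : FF) : Prop :=
  exists U0 U1 V0 V1 : {poly CC},
    V0.[0] + V1.[0] * c != 0 /\
    ffmul f g (uv_elt V0 V1) = uv_elt U0 U1.

(* A q-differential is omega = g (dx)^q with g in the function field; we
   identify omega with g.  omega is holomorphic at a point P iff, writing
   omega = h (dt)^q for a local parameter t at P, h is regular at P:
   - (a, b) affine with b <> 0 : t = x - a, dx/dt = 1, h = g;
   - (a, 0) branch point       : t = y, dx/dy = 2y/f'(x), h = g (2y/f')^q;
   - (0, c) point at infinity  : t = u = 1/x, dx/du = -x^2, h = g (-x^2)^q. *)
Definition holo_at_aff (f : {poly CC}) (q : nat) (a b : CC) (g : FF) : Prop :=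
  if b == 0 then
    regular_aff f a b
      (ffmul f g (ffexp f (ffmul f ffy (ffX (rfc 2 / rf f^`()))) q))
  else regular_aff f a b g.

Definition holo_at_inf (f : {poly CC}) (q : nat) (c : CC) (g : FF) : Prop :=
  regular_inf f c (ffmul f g (ffexp f (ffX (- rfx ^+ 2)) q)).

Definition holo_qdiff (f : {poly CC}) (q : nat) (g : FF) : Prop :=
  (forall a b : CC, b ^+ 2 = f.[a] -> holo_at_aff f q a b g) /\
  (forall c : CC, c ^+ 2 = lead_coef f -> holo_at_inf f q c g).

Definition ffcomb (B : seq FF) (c : 'I_(size B) -> CC) : FF :=
  (\sum_(i < size B) rfc (c i) * (nth (0, 0) B i).1,
   \sum_(i < size B) rfc (c i) * (nth (0, 0) B i).2).

Definition is_basis_H0 (f : {poly CC}) (q : nat) (B : seq FF) : Prop :=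
  (forall g, g \in B -> holo_qdiff f q g) /\
  (forall c : 'I_(size B) -> CC, ffcomb c = (0, 0) -> forall i, c i = 0) /\
  (forall g, holo_qdiff f q g -> exists c : 'I_(size B) -> CC, ffcomb c = g).

Definition ffyinv (f : {poly CC}) (q : nat) : FF := ffinv f (ffexp f ffy q).

Definition bq_elt (f : {poly CC}) (q : nat) (beta : CC) (j : nat) : FF :=
  ffmul f (ffpoly (('X - beta%:P) ^+ j)) (ffyinv f q).

Definition bq_elt_y (f : {poly CC}) (q : nat) (beta : CC) (j : nat) : FF :=
  ffmul f (ffmul f (ffpoly (('X - beta%:P) ^+ j)) ffy) (ffyinv f q).

Definition binom_half (k : nat) : CC :=
  (\prod_(i < k) (2^-1 - i%:R)) / (k`!)%:R.

(* Degree-4 Taylor polynomial at x = w (f(w) <> 0) of the local branch of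
   y = sqrt(f(x)) through the point (w, b), b^2 = f(w):
   y = b (1 + h)^{1/2} with h = f/f(w) - 1, h(w) = 0, so near w
   y = b sum_k binom(1/2,k) h^k, whose Taylor polynomial of degree 4 is the
   remainder of b sum_{k<=4} binom(1/2,k) h^k modulo (x - w)^5. *)
Definition taylor4_branch (f : {poly CC}) (w b : CC) : {poly CC} :=
  let h := (f.[w])^-1 *: f - 1 in
  (b *: \sum_(k < 5) binom_half k *: h ^+ k) %% ('X - w%:P) ^+ 5.

(* f_{beta,4,m} where the point P_m^beta is (beta, b) *)
Definition f_beta4 (f : {poly CC}) (beta b : CC) : {poly CC} :=
  if root f beta then 0 else taylor4_branch f beta b.

Definition B1 (f : {poly CC}) (beta : CC) : seq FF :=
  [seq bq_elt f 1 beta j | j <- iota 0 3].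

Definition B2 (f : {poly CC}) (beta b : CC) : seq FF :=
  [seq bq_elt f 2 beta j | j <- iota 0 5] ++
  [:: ffmul f (ffadd ffy (ffpoly (- f_beta4 f beta b))) (ffyinv f 2)].

Definition Bq (f : {poly CC}) (q : nat) (beta : CC) : seq FF :=
  [seq bq_elt f q beta j | j <- iota 0 (2 * q).+1] ++
  [seq bq_elt_y f q beta j | j <- iota 0 (2 * q - 3)].

(* Main.v *)
Require Import Defs.
From HB Require Import structures.
From mathcomp Require Import all_boot all_order all_algebra all_field.
From mathcomp Require Import fraction complex.
From mathcomp Require Import Rstruct ring zify.
From Stdlib Require Import Lia.
Local Open Scope ring_scope.
Import GRing.Theory Num.Theory Num.Def.

Set Implicit Arguments.
Unset Strict Implicit.
Unset Printing Implicit Defensive.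


Lemma ffmulC f (g h : FF) : ffmul f g h = ffmul f h g.
Proof. case: g h => [a b] [c d]; rewrite /ffmul /=; congr pair; ring. Qed.

Lemma ffmulA f (g h k : FF) : ffmul f g (ffmul f h k) = ffmul f (ffmul f g h) k.
Proof. case: g h k => [a b] [c d] [e e']; rewrite /ffmul /=; congr pair; ring. Qed.

Lemma ffmulDl f (g h k : FF) : ffmul f (ffadd g h) k = ffadd (ffmul f g k) (ffmul f h k).
Proof. case: g h k => [a b] [c d] [e e']; rewrite /ffmul /ffadd /=; congr pair; ring. Qed.

Lemma ffmul1 f (g : FF) : ffmul f (1, 0) g = g.
Proof. case: g => [a b]; rewrite /ffmul /=; congr pair; ring. Qed.

Lemma ffexpS f g n : ffexp f g n.+1 = ffmul f g (ffexp f g n).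
Proof. by []. Qed.

Lemma ffexpM f g h n : ffexp f (ffmul f g h) n = ffmul f (ffexp f g n) (ffexp f h n).
Proof.
elim: n => [|n IH]; first by rewrite /ffexp /= ffmul1.
rewrite !ffexpS IH.
rewrite !ffmulA; congr ffmul.
rewrite -!ffmulA; congr ffmul; exact: ffmulC.
Qed.

Lemma ffXM f a b : ffmul f (ffX a) (ffX b) = ffX (a * b).
Proof. rewrite /ffmul /ffX /=; congr pair; ring. Qed.

Lemma ffexpX f a n : ffexp f (ffX a) n = ffX (a ^+ n).
Proof.
elim: n => [|n IH]; first by [].
by rewrite ffexpS IH ffXM exprS.
Qed.

Definition ffN f (g : FF) : RF := g.1 ^+ 2 - g.2 ^+ 2 * rf f.

Lemma ffNM f g h : ffN f (ffmul f g h) = ffN f g * ffN f h.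
Proof. case: g h => [a b] [c d]; rewrite /ffN /ffmul /=; ring. Qed.

Lemma ffN_exp f g n : ffN f (ffexp f g n) = ffN f g ^+ n.
Proof.
elim: n => [|n IH]; first by rewrite /ffN /= expr0; ring.
by rewrite ffexpS ffNM IH exprS.
Qed.

Lemma ffinvK f g : ffN f g != 0 -> ffmul f (ffinv f g) g = (1, 0).
Proof.
case: g => [a b]; rewrite /ffN /ffinv /ffmul /= => h.
set n := a ^+ 2 - b ^+ 2 * rf f in h *.
congr pair.
  have -> : a / n * a + - b / n * b * rf f = n / n by rewrite /n; ring.
  by rewrite divff.
rewrite /n; ring.
Qed.

Lemma rf_neq0 (p : {poly CC}) : p != 0 -> rf p != 0.
Proof. by rewrite /rf tofrac_eq0. Qed.

Lemma ffN_y f : ffN f ffy = - rf f.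
Proof. rewrite /ffN /ffy /=; ring. Qed.

Lemma ffyinvK f q : f != 0 -> ffmul f (ffyinv f q) (ffexp f ffy q) = (1, 0).
Proof.
move=> hf; apply: ffinvK; rewrite ffN_exp ffN_y expf_neq0 // oppr_eq0.
exact: rf_neq0.
Qed.

Lemma ff_decomp f q g : f != 0 ->
  g = ffmul f (ffmul f g (ffexp f ffy q)) (ffyinv f q).
Proof.
move=> hf; rewrite -ffmulA [ffmul f (ffexp f ffy q) _]ffmulC ffyinvK //.
by rewrite ffmulC ffmul1.
Qed.

Definition PP := ({poly CC} * {poly CC})%type.
Definition rfp (V : PP) : FF := (rf V.1, rf V.2).
Definition pmul (f : {poly CC}) (V W : PP) : PP :=
  (V.1 * W.1 + V.2 * W.2 * f, V.1 * W.2 + V.2 * W.1).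
Definition pexp f (V : PP) n : PP := iter n (pmul f V) (1, 0).
Definition pev (a b : CC) (V : PP) : CC := V.1.[a] + V.2.[a] * b.

Lemma rfp_mul f V W : rfp (pmul f V W) = ffmul f (rfp V) (rfp W).
Proof.
case: V W => [a b] [c d]; rewrite /rfp /pmul /ffmul /rf /=.
by rewrite !(rmorphD, rmorphM).
Qed.

Lemma rfp_exp f V n : rfp (pexp f V n) = ffexp f (rfp V) n.
Proof.
elim: n => [|n IH]; first by rewrite /rfp /= /rf rmorph1 rmorph0.
by rewrite /pexp iterS -/(pexp f V n) rfp_mul IH.
Qed.

Lemma pev_mul f a b V W : b ^+ 2 = f.[a] -> pev a b (pmul f V W) = pev a b V * pev a b W.
Proof.
case: V W => [v0 v1] [w0 w1] hb; rewrite /pev /pmul /=.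
rewrite !(hornerD, hornerM) -hb; ring.
Qed.

Lemma pev_exp f a b V n : b ^+ 2 = f.[a] -> pev a b (pexp f V n) = pev a b V ^+ n.
Proof.
move=> hb; elim: n => [|n IH]; first by rewrite /pev /= hornerC horner0 mul0r addr0 expr0.
by rewrite /pexp iterS -/(pexp f V n) (pev_mul _ _ hb) IH exprS.
Qed.

Lemma ffy_rfp : ffy = rfp (0, 1).
Proof. by rewrite /rfp /rf /= rmorph0 rmorph1. Qed.


Definition ev (p : {poly CC}) : RF := (map_poly (@tofrac _ \o polyC) p).[rfx^-1].

Lemma evinvx_ev p : evinvx p = ev p.
Proof.
rewrite /ev /evinvx (@horner_coef_wide _ (size p)); last exact: size_poly.
apply: eq_bigr => i _; rewrite coef_map /= exprVn.
by [].
Qed.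

Lemma evM p q : ev (p * q) = ev p * ev q.
Proof. by rewrite /ev rmorphM hornerM. Qed.
Lemma evD p q : ev (p + q) = ev p + ev q.
Proof. by rewrite /ev rmorphD hornerD. Qed.
Lemma evN p : ev (- p) = - ev p.
Proof. by rewrite /ev rmorphN hornerN. Qed.
Lemma ev1 : ev 1 = 1.
Proof. by rewrite /ev rmorph1 hornerC. Qed.
Lemma ev0 : ev 0 = 0.
Proof. by rewrite /ev rmorph0 horner0. Qed.
Lemma evZ c p : ev (c *: p) = rfc c * ev p.
Proof. by rewrite -mul_polyC evM /ev map_polyC hornerC. Qed.

Lemma rfM p q : rf (p * q) = rf p * rf q.
Proof. exact: rmorphM. Qed.
Lemma rfD p q : rf (p + q) = rf p + rf q.
Proof. exact: rmorphD. Qed.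
Lemma rfN p : rf (- p) = - rf p.
Proof. exact: rmorphN. Qed.
Lemma rf0 : rf 0 = 0.
Proof. exact: rmorph0. Qed.
Lemma rf1 : rf 1 = 1.
Proof. exact: rmorph1. Qed.
Lemma rfXn m : rf 'X^m = rfx ^+ m.
Proof. exact: rmorphXn. Qed.
Lemma rfexp p m : rf (p ^+ m) = rf p ^+ m.
Proof. exact: rmorphXn. Qed.
Lemma rfZ c p : rf (c *: p) = rfc c * rf p.
Proof. by rewrite -mul_polyC rfM. Qed.

Lemma rfx_neq0 : rfx != 0.
Proof. by rewrite /rfx tofrac_eq0 polyX_eq0. Qed.

Definition revp (N : nat) (p : {poly CC}) : {poly CC} := \poly_(i < N.+1) p`_(N - i).

Lemma ev_wide n (p : {poly CC}) : (size p <= n)%N ->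
  ev p = \sum_(i < n) rfc p`_i / rfx ^+ i.
Proof.
move=> hs; rewrite /ev (@horner_coef_wide _ n); last first.
  exact: leq_trans (size_poly _ _) hs.
by apply: eq_bigr => i _; rewrite coef_map /= exprVn.
Qed.

Lemma rf_revp N (p : {poly CC}) : (size p <= N.+1)%N -> rf (revp N p) = rfx ^+ N * ev p.
Proof.
move=> hs.
rewrite (ev_wide hs) /revp poly_def /rf rmorph_sum /= mulr_sumr.
rewrite [RHS](reindex_inj rev_ord_inj) /=.
apply: eq_bigr => i _.
rewrite -mul_polyC rmorphM rmorphXn /= -/(rfc _) -/rfx subSS.
have hi : (i <= N)%N by rewrite -ltnS.
rewrite mulrCA; congr (_ * _).
have -> : rfx ^+ N = rfx ^+ i * rfx ^+ (N - i) by rewrite -exprD subnKC.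
rewrite -mulrA divff ?mulr1 //.
by rewrite expf_neq0 // rfx_neq0.
Qed.

Lemma revpK N (p : {poly CC}) : (size p <= N.+1)%N -> revp N (revp N p) = p.
Proof.
move=> hs; apply/polyP => i; rewrite /revp !coef_poly.
case: ltnP => hi.
  rewrite ifT; last by rewrite ltnS leq_subr.
  by rewrite subKn // -ltnS.
by rewrite nth_default // (leq_trans hs hi).
Qed.

Lemma size_revp N p : (size (revp N p) <= N.+1)%N.
Proof. exact: size_poly. Qed.

Lemma ev_revp N (p : {poly CC}) : (size p <= N.+1)%N -> ev (revp N p) = rf p / rfx ^+ N.
Proof.
move=> hs; have := rf_revp (size_revp N p); rewrite revpK // => ->.
by rewrite mulrC mulKf // expf_neq0 // rfx_neq0.
Qed.

Lemma size_revp_eq N (p : {poly CC}) : p`_0 != 0 -> size (revp N p) = N.+1.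
Proof.
move=> h0; apply/eqP; rewrite eqn_leq size_revp /=.
rewrite ltnNge; apply/negP => hle.
have := nth_default 0 hle; rewrite /revp coef_poly ltnSn subnn => e.
by move: h0; rewrite e eqxx.
Qed.

Lemma deg_at_inf (p W U : {poly CC}) m :
  W.[0] != 0 -> rf p * ev W = rfx ^+ m * ev U -> (size p <= m.+1)%N.
Proof.
move=> hW e.
have [->|hp] := eqVneq p 0; first by rewrite size_poly0.
set N := maxn (size W) (size U).
have hWN : (size W <= N.+1)%N by rewrite leqW // leq_maxl.
have hUN : (size U <= N.+1)%N by rewrite leqW // leq_maxr.
have e2 : rf (p * revp N W) = rf ('X^m * revp N U).
  rewrite !rfM (rf_revp hWN) (rf_revp hUN) rfXn.
  rewrite mulrCA e; ring.
move/eqP: e2; rewrite /rf tofrac_eq => /eqP e2.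
have hW0 : W`_0 != 0 by rewrite -horner_coef0.
have hrW : revp N W != 0 by rewrite -size_poly_eq0 size_revp_eq.
have := size_mul hp hrW; rewrite e2 size_revp_eq // => hs.
have := size_polyMleq 'X^m (revp N U); rewrite size_polyXn.
have := size_revp N U.
move: hs => /= ->.
move=> h1 h2; have := leq_trans h2 (leq_add (leqnn m) h1).
by rewrite addnS /= addnS -addSn leq_add2r.
Qed.

Definition Fr (f : {poly CC}) := revp 8 f.
Definition uv (V : PP) : FF := uv_elt V.1 V.2.

Lemma evF (f : {poly CC}) : size f = 9%N -> ev (Fr f) = rf f / rfx ^+ 8.
Proof. by move=> hf; rewrite /Fr ev_revp // hf. Qed.

Lemma uv_mul (f : {poly CC}) V W : size f = 9%N ->
  uv (pmul (Fr f) V W) = ffmul f (uv V) (uv W).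
Proof.
move=> hf; case: V W => [v0 v1] [w0 w1].
rewrite /uv /uv_elt /pmul /ffmul /= !evinvx_ev !evD !evM evF //.
have h8 : (rfx ^+ 8)^-1 = (rfx ^+ 4)^-1 ^+ 2 by rewrite exprVn -exprM.
rewrite h8.
congr pair; ring.
Qed.

Lemma uv_exp (f : {poly CC}) V n : size f = 9%N -> uv (pexp (Fr f) V n) = ffexp f (uv V) n.
Proof.
move=> hf; elim: n => [|n IH].
  by rewrite /uv /uv_elt /= !evinvx_ev ev1 ev0 mul0r.
by rewrite /pexp iterS -/(pexp _ V n) uv_mul // IH.
Qed.

Lemma Fr0 (f : {poly CC}) : size f = 9%N -> (Fr f).[0] = lead_coef f.
Proof. by move=> hf; rewrite horner_coef0 /Fr /revp coef_poly /lead_coef hf. Qed.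

Lemma reg_inf_mul (f : {poly CC}) c h S : size f = 9%N ->
  regular_inf f c h -> regular_inf f c (ffmul f h (uv S)).
Proof.
move=> hf [U0 [U1 [V0 [V1 [hV e]]]]].
exists (pmul (Fr f) (U0, U1) S).1, (pmul (Fr f) (U0, U1) S).2, V0, V1; split => //.
rewrite -ffmulA (ffmulC _ (uv S)) ffmulA e.
by have := uv_mul (U0, U1) S hf; rewrite /uv /= => <-.
Qed.

Lemma reg_aff_mul f a b g S :
  regular_aff f a b g -> regular_aff f a b (ffmul f g (rfp S)).
Proof.
move=> [U0 [U1 [V0 [V1 [hV e]]]]].
exists (pmul f (U0, U1) S).1, (pmul f (U0, U1) S).2, V0, V1; split => //.
have -> : (rf V0, rf V1) = rfp (V0, V1) by [].
rewrite -ffmulA (ffmulC _ (rfp S)) ffmulA.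
have -> : ffmul f g (rfp (V0, V1)) = rfp (U0, U1) by [].
by rewrite -rfp_mul.
Qed.


Definition nopole (phi : {poly CC} -> RF) (a : CC) (A : RF) : Prop :=
  exists D E : {poly CC}, D.[a] != 0 /\ A * phi D = phi E.

Lemma split_gen (phi : {poly CC} -> RF)
  (phiD : forall p q, phi (p + q) = phi p + phi q)
  (phiN : forall p, phi (- p) = - phi p)
  (phiM : forall p q, phi (p * q) = phi p * phi q)
  (F : {poly CC}) (a b : CC) (A B : RF) (V0 V1 U0 U1 W0 W1 T0 T1 : {poly CC}) :
  b ^+ 2 = F.[a] ->
  V0.[a] + V1.[a] * b != 0 -> W0.[a] + W1.[a] * (- b) != 0 ->
  A * phi V0 + B * phi V1 * phi F = phi U0 -> A * phi V1 + B * phi V0 = phi U1 ->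
  A * phi W0 + B * phi W1 * phi F = phi T0 -> A * phi W1 + B * phi W0 = phi T1 ->
  nopole phi a A /\ nopole phi a B.
Proof.
move=> hb hV hW e1 e2 e3 e4.
set M0 := V0 * W0 - V1 * W1 * F.
set M1 := V1 * W0 - V0 * W1.
have hA0 : A * phi M0 = phi (U0 * W0 - T1 * V1 * F).
  rewrite /M0 !(phiD, phiN, phiM) -e1 -e4; ring.
have hA1 : A * phi M1 = phi (U1 * W0 - T1 * V0).
  rewrite /M1 !(phiD, phiN, phiM) -e2 -e4; ring.
have hB0 : B * phi M0 = phi (U1 * W0 - T0 * V1).
  rewrite /M0 !(phiD, phiN, phiM) -e2 -e3; ring.
have hB1 : B * phi (M1 * F) = phi (U0 * W0 - T0 * V0).
  rewrite /M1 !(phiD, phiN, phiM) -e1 -e3; ring.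
have hM : M0.[a] + M1.[a] * b = (V0.[a] + V1.[a] * b) * (W0.[a] + W1.[a] * (- b)).
  rewrite /M0 /M1 !(hornerD, hornerN, hornerM) -hb; ring.
have : M0.[a] + M1.[a] * b != 0 by rewrite hM mulf_neq0.
have [h0|h0] := eqVneq M0.[a] 0.
  rewrite h0 add0r mulf_eq0 negb_or => /andP [hm1 hb0].
  have hF : F.[a] != 0 by rewrite -hb expf_neq0.
  split.
    by exists M1, (U1 * W0 - T1 * V0).
  by exists (M1 * F), (U0 * W0 - T0 * V0); rewrite hornerM mulf_neq0.
move=> _; split.
  by exists M0, (U0 * W0 - T1 * V1 * F).
by exists M0, (U1 * W0 - T0 * V1).
Qed.

Lemma rfcM (x y : CC) : rfc (x * y) = rfc x * rfc y.
Proof. by rewrite /rfc polyCM rmorphM. Qed.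
Lemma rfc1 : rfc 1 = 1.
Proof. by rewrite /rfc rmorph1. Qed.

Lemma nopole_poly (A : RF) : (forall a, nopole rf a A) -> exists P, A = rf P.
Proof.
move=> hA.
suff H : forall n (D E : {poly CC}), (size D <= n)%N -> D != 0 -> A * rf D = rf E ->
    exists P, A = rf P.
  have [D [E [hD e]]] := hA 0.
  apply: (H (size D) D E) => //.
  by apply: contraNneq hD => ->; rewrite horner0.
elim=> [|n IH] D E hs hD e.
  by move: hD; rewrite -size_poly_eq0; move: hs; case: (size D).
have [hs1|hs1] := eqVneq (size D) 1%N.
  have hDc := size1_polyC (eq_leq hs1).
  have hc : D`_0 != 0.
    by apply: contraNneq hD => h0; rewrite hDc h0.
  move: hDc hc; set c := D`_0 => hDc hc.
  exists (c^-1 *: E).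
  rewrite rfZ -e hDc.
  have -> : rf c%:P = rfc c by [].
  by rewrite mulrCA -rfcM mulVf // rfc1 mulr1.
have [a ha] := closed_rootP D hs1.
have [D' [E' [hD' e']]] := hA a.
set r := D' %% D.
have hr : A * rf r = rf (E' - (D' %/ D) * E).
  have hdiv := divp_eq D' D.
  have -> : r = D' - (D' %/ D) * D by rewrite {1}hdiv -/r addrAC subrr add0r.
  by rewrite rfD rfN !rfM mulrDr e' mulrN mulrCA e rfD rfN rfM.
have [r0|rn0] := eqVneq r 0.
  move: hD'; rewrite (divp_eq D' D) -/r r0 addr0 hornerM.
  by move/rootP: ha => ->; rewrite mulr0 eqxx.
apply: (IH r _ _ rn0 hr).
have := ltn_modpN0 D' hD; rewrite -/r => h.
by rewrite -ltnS (leq_trans h hs).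
Qed.


Definition Phi (f : {poly CC}) q (P Q : {poly CC}) : FF :=
  ffmul f (rf P, rf Q) (ffyinv f q).

Lemma rfcX (x : CC) n : rfc (x ^+ n) = rfc x ^+ n.
Proof. by rewrite /rfc !rmorphXn. Qed.
Lemma rfcN (x : CC) : rfc (- x) = - rfc x.
Proof. by rewrite /rfc !rmorphN. Qed.

Lemma f_neq0 (f : {poly CC}) : size f = 9%N -> f != 0.
Proof. by move=> h; rewrite -size_poly_eq0 h. Qed.

Lemma lc_neq0 (f : {poly CC}) : size f = 9%N -> lead_coef f != 0.
Proof. by move=> h; rewrite lead_coef_eq0 f_neq0. Qed.

Lemma sep_root (f : {poly CC}) a : separable_poly f -> root f a -> f^`().[a] != 0.
Proof. by rewrite unlock => hc; apply: coprimep_root. Qed.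

Lemma deriv_neq0 (f : {poly CC}) : size f = 9%N -> separable_poly f -> f^`() != 0.
Proof.
move=> hs hsep; have [a ha] : exists a, root f a by apply/closed_rootP; rewrite hs.
by apply: contraNneq (sep_root hsep ha) => ->; rewrite horner0.
Qed.

Lemma yc_id (f : {poly CC}) q G c : f != 0 ->
  ffmul f (ffmul f G (ffyinv f q)) (ffexp f (ffmul f ffy (ffX c)) q) = ffmul f (ffX (c ^+ q)) G.
Proof.
move=> hf; rewrite ffexpM ffexpX.
rewrite -ffmulA [ffmul f (ffyinv f q) _]ffmulA ffyinvK // ffmul1 ffmulC.
by [].
Qed.

Definition c0 : RF := - (rfx ^+ 2)^-1.

Lemma uv01 : uv (0, 1) = (0, (rfx ^+ 4)^-1).
Proof. by rewrite /uv /uv_elt /= !evinvx_ev ev0 ev1 mul1r. Qed.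

Lemma Xv_id (f : {poly CC}) : ffmul f (ffX (- rfx ^+ 2)) (uv (0, 1)) = ffmul f ffy (ffX c0).
Proof.
rewrite uv01 /ffmul /ffX /ffy /c0 /=.
have hx2 : rfx ^+ 2 != 0 by rewrite expf_neq0 // rfx_neq0.
have -> : (rfx ^+ 4)^-1 = (rfx ^+ 2)^-1 * (rfx ^+ 2)^-1.
  by rewrite -invfM -exprD.
congr pair; first ring.
rewrite !mulNr mulrA mulfV //; ring.
Qed.

Lemma inf_id (f : {poly CC}) q G : size f = 9%N ->
  ffmul f (ffmul f (ffmul f G (ffyinv f q)) (ffexp f (ffX (- rfx ^+ 2)) q))
     (uv (pexp (Fr f) (0, 1) q)) = ffmul f (ffX (c0 ^+ q)) G.
Proof.
move=> hs; rewrite uv_exp // -ffmulA -ffexpM Xv_id yc_id //.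
exact: f_neq0.
Qed.

Lemma c0X q : c0 ^+ q = rfc ((-1) ^+ q) / rfx ^+ (2 * q).
Proof.
rewrite /c0 rfcX rfcN rfc1 -mulN1r exprMn exprVn -exprM.
by [].
Qed.

Lemma pev01 a b : pev a b (0, 1) = b.
Proof. by rewrite /pev /= horner0 hornerC mul1r add0r. Qed.

Lemma holo_of_form (f : {poly CC}) q (P Q : {poly CC}) :
  size f = 9%N -> separable_poly f ->
  (size P <= (2 * q).+1)%N -> (size Q <= 2 * q - 3)%N ->
  holo_qdiff f q (Phi f q P Q).
Proof.
move=> hs hsep hP hQ.
have hf := f_neq0 hs.
split.
  move=> a b hb; rewrite /holo_at_aff /Phi.
  case: eqP => [b0|bn0].
    rewrite yc_id //.
    set c := rfc 2 / rf f^`().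
    have hd : f^`().[a] != 0.
      by apply: sep_root => //; rewrite /root -hb b0 expr0n.
    have hk : rfc 2 ^+ q = c ^+ q * rf f^`() ^+ q.
      by rewrite -exprMn /c divfK // rf_neq0 // deriv_neq0.
    exists (2 ^+ q *: P), (2 ^+ q *: Q), (f^`() ^+ q), 0; split.
      by rewrite horner0 mul0r addr0 horner_exp expf_neq0.
    rewrite /ffmul /ffX /= rf0 !rfZ rfexp rfcX hk; congr pair; ring.
  exists P, Q, (pexp f (0, 1) q).1, (pexp f (0, 1) q).2; split.
    have := pev_exp (0, 1) q hb; rewrite pev01 /pev => ->.
    by rewrite expf_neq0 //; apply/eqP.
  have -> : (rf (pexp f (0, 1) q).1, rf (pexp f (0, 1) q).2) = rfp (pexp f (0, 1) q) by [].
  rewrite rfp_exp -ffy_rfp -ffmulA.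
  by rewrite ffyinvK // ffmulC ffmul1.
move=> c hc; rewrite /holo_at_inf /Phi.
have hcF : c ^+ 2 = (Fr f).[0] by rewrite Fr0.
have hc0 : c != 0.
  by apply: contraNneq (lc_neq0 hs) => c0'; rewrite -hc c0' expr0n.
exists ((-1) ^+ q *: revp (2 * q) P),
  (if (2 <= q)%N then (-1) ^+ q *: revp (2 * q - 4) Q else 0),
  (pexp (Fr f) (0, 1) q).1, (pexp (Fr f) (0, 1) q).2; split.
  have := pev_exp (0, 1) q hcF; rewrite pev01 /pev => ->.
  by rewrite expf_neq0.
have -> : uv_elt (pexp (Fr f) (0, 1) q).1 (pexp (Fr f) (0, 1) q).2 =
  uv (pexp (Fr f) (0, 1) q) by [].
rewrite inf_id // c0X /uv_elt !evinvx_ev /ffmul /ffX /=.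
have hx : forall n, rfx ^+ n != 0 by move=> n; rewrite expf_neq0 // rfx_neq0.
congr pair.
  rewrite evZ ev_revp //; ring.
case: ifP => hq.
  rewrite evZ ev_revp; last by rewrite (leq_trans hQ) //; lia.
  have -> : rfx ^+ (2 * q) = rfx ^+ (2 * q - 4) * rfx ^+ 4.
    by rewrite -exprD subnK //; lia.
  rewrite invfM; ring.
have -> : Q = 0.
  by apply/eqP; rewrite -size_poly_eq0 -leqn0 (leq_trans hQ) //; lia.
by rewrite rf0 ev0; ring.
Qed.

Lemma aff_split (f : {poly CC}) a b (G : FF) : b ^+ 2 = f.[a] ->
  regular_aff f a b G -> regular_aff f a (- b) G ->
  nopole rf a G.1 /\ nopole rf a G.2.
Proof.
case: G => A B hb [U0 [U1 [V0 [V1 [hV e]]]]] [T0 [T1 [W0 [W1 [hW e']]]]].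
move: e e'; rewrite /ffmul /= => [[e1 e2] [e3 e4]].
exact: (split_gen rfD rfN rfM hb hV hW e1 e2 e3 e4).
Qed.

Lemma inf_phi (f : {poly CC}) c (A B : RF) : size f = 9%N ->
  regular_inf f c (A, B) ->
  exists U0 U1 V0 V1 : {poly CC}, V0.[0] + V1.[0] * c != 0 /\
    A * ev V0 + (B * rfx ^+ 4) * ev V1 * ev (Fr f) = ev U0 /\
    A * ev V1 + (B * rfx ^+ 4) * ev V0 = ev U1.
Proof.
move=> hs [U0 [U1 [V0 [V1 [hV e]]]]].
exists U0, U1, V0, V1; split => //.
move: e; rewrite /uv_elt /ffmul /= !evinvx_ev => [[e1 e2]].
have hx4 : rfx ^+ 4 != 0 by rewrite expf_neq0 // rfx_neq0.
split.
  rewrite -e1 evF //.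
  have h8 : (rfx ^+ 8)^-1 = (rfx ^+ 4)^-1 * (rfx ^+ 4)^-1 by rewrite -invfM -exprD.
  rewrite h8.
  have -> : B * rfx ^+ 4 * ev V1 * (rf f * ((rfx ^+ 4)^-1 * (rfx ^+ 4)^-1)) =
    B * (ev V1 * (rfx ^+ 4)^-1) * rf f * (rfx ^+ 4 / rfx ^+ 4) by ring.
  by rewrite divff // mulr1.
have -> : ev U1 = ev U1 / rfx ^+ 4 * rfx ^+ 4 by rewrite divfK.
rewrite -e2.
have -> : A * ev V1 + B * rfx ^+ 4 * ev V0 =
  (A * (ev V1 * (rfx ^+ 4)^-1) + B * ev V0) * rfx ^+ 4 + A * ev V1 * (1 - rfx ^+ 4 / rfx ^+ 4) by ring.
by rewrite divff // subrr mulr0 addr0.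
Qed.

Lemma inf_split (f : {poly CC}) c (H : FF) : size f = 9%N -> c ^+ 2 = lead_coef f ->
  regular_inf f c H -> regular_inf f (- c) H ->
  nopole ev 0 H.1 /\ nopole ev 0 (H.2 * rfx ^+ 4).
Proof.
case: H => A B hs hc h1 h2.
have [U0 [U1 [V0 [V1 [hV [e1 e2]]]]]] := inf_phi hs h1.
have [T0 [T1 [W0 [W1 [hW [e3 e4]]]]]] := inf_phi hs h2.
have hb : c ^+ 2 = (Fr f).[0] by rewrite Fr0.
exact: (split_gen evD evN evM hb hV hW e1 e2 e3 e4).
Qed.

Lemma deg_sgn (p D E : {poly CC}) k m : D.[0] != 0 ->
  rfc ((-1) ^+ k) / rfx ^+ m * rf p * ev D = ev E -> (size p <= m.+1)%N.
Proof.
move=> hD e; apply: (@deg_at_inf p D ((-1) ^+ k *: E) m hD).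
rewrite evZ -e.
set u := rfc ((-1) ^+ k).
have hu : u * u = 1 by rewrite /u -rfcM -expr2 sqrr_sign rfc1.
have hx : rfx ^+ m != 0 by rewrite expf_neq0 // rfx_neq0.
have -> : rfx ^+ m * (u * (u / rfx ^+ m * rf p * ev D)) =
  (u * u) * (rfx ^+ m / rfx ^+ m) * (rf p * ev D) by ring.
by rewrite hu divff // !mul1r.
Qed.

Lemma ffX_pair (f : {poly CC}) s a b : ffmul f (ffX s) (a, b) = (s * a, s * b).
Proof. rewrite /ffmul /ffX /=; congr pair; ring. Qed.

Lemma ffmulX1 (f : {poly CC}) g : ffmul f (ffX 1) g = g.
Proof. case: g => a b; rewrite /ffmul /ffX /=; congr pair; ring. Qed.

Lemma two_neq0 : (2 : CC) != 0.
Proof. by rewrite pnatr_eq0. Qed.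

Lemma form_of_holo (f : {poly CC}) q g : size f = 9%N -> separable_poly f ->
  holo_qdiff f q g ->
  exists P Q : {poly CC}, [/\ (size P <= (2 * q).+1)%N, (size Q <= 2 * q - 3)%N & g = Phi f q P Q].
Proof.
move=> hs hsep [hA hI].
have hf := f_neq0 hs.
move Gdef : (ffmul f g (ffexp f ffy q)) => G.
have hg : g = ffmul f G (ffyinv f q) by rewrite -Gdef -ff_decomp.
have regG : forall a b, b ^+ 2 = f.[a] -> regular_aff f a b G.
  move=> a b hb; have := hA a b hb; rewrite /holo_at_aff; case: eqP => [b0|bn0] hr.
    move: hr; rewrite {1}hg yc_id // => hr.
    have := reg_aff_mul ((2^-1 *: f^`()) ^+ q, 0) hr.
    set c := rfc 2 / rf f^`().
    have -> : rfp ((2^-1 *: f^`()) ^+ q, 0) = ffX (rf ((2^-1 *: f^`()) ^+ q)).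
      by rewrite /rfp /ffX /= rf0.
    rewrite -ffmulA (ffmulC _ G) ffmulA ffXM.
    have -> : c ^+ q * rf ((2^-1 *: f^`()) ^+ q) = 1.
      rewrite rfexp -exprMn rfZ /c.
      have hd : rf f^`() != 0 by rewrite rf_neq0 // deriv_neq0.
      have -> : rfc 2 / rf f^`() * (rfc 2^-1 * rf f^`()) =
        rfc (2 * 2^-1) * (rf f^`() / rf f^`()) by rewrite rfcM; ring.
      by rewrite (divff hd) (mulfV two_neq0) rfc1 mulr1 expr1n.
    by rewrite ffmulX1.
  rewrite -Gdef ffy_rfp -rfp_exp.
  exact: reg_aff_mul.
have np : forall a, nopole rf a G.1 /\ nopole rf a G.2.
  move=> a; set b := sqrtC f.[a].
  have hb : b ^+ 2 = f.[a] by rewrite sqrtCK.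
  have hb' : (- b) ^+ 2 = f.[a] by rewrite sqrrN.
  exact: aff_split hb (regG a b hb) (regG a (- b) hb').
have [P hP] := nopole_poly (fun a => (np a).1).
have [Q hQ] := nopole_poly (fun a => (np a).2).
have hGPQ : G = (rf P, rf Q) by rewrite -hP -hQ; case: (G).
set c := sqrtC (lead_coef f).
have hc : c ^+ 2 = lead_coef f by rewrite sqrtCK.
have hc' : (- c) ^+ 2 = lead_coef f by rewrite sqrrN.
have hreg : forall c', c' ^+ 2 = lead_coef f ->
    regular_inf f c' (c0 ^+ q * rf P, c0 ^+ q * rf Q).
  move=> c' hc'2; have := reg_inf_mul (pexp (Fr f) (0, 1) q) hs (hI c' hc'2).
  by rewrite hg inf_id // hGPQ ffX_pair.
have [[D1 [E1 [hD1 e1]]] [D2 [E2 [hD2 e2]]]] := inf_split hs hc (hreg c hc) (hreg (- c) hc').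
move: e1 e2; rewrite /= c0X => e1 e2.
exists P, Q; split => //.
  exact: deg_sgn hD1 e1.
have hQ4 : (size (Q * 'X^4)%R <= (2 * q).+1)%N.
  apply: (deg_sgn (k := q) (E := E2) hD2); rewrite rfM rfXn -e2; ring.
have [->|hQ0] := eqVneq Q 0; first by rewrite size_poly0.
move: hQ4; rewrite size_mulXn //; move: (size Q) => n; clear; lia.
by rewrite /Phi hg hGPQ.
Qed.


Lemma XsubC_comp (beta : CC) j :
  ('X - beta%:P) ^+ j \Po ('X + beta%:P) = 'X ^+ j.
Proof. by rewrite rmorphXn /= comp_polyB comp_polyX comp_polyC addrK. Qed.

Lemma shift_indep (beta : CC) n (d : nat -> CC) :
  \sum_(j < n) d j *: ('X - beta%:P) ^+ j = 0 -> forall j, (j < n)%N -> d j = 0.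
Proof.
move=> e j hj.
have e2 : \sum_(j < n) d j *: 'X ^+ j = 0 :> {poly CC}.
  apply: etrans (_ : _ = comp_poly ('X + beta%:P) (\sum_(j < n) d j *: ('X - beta%:P) ^+ j)) _;
    last by rewrite e comp_poly0.
  rewrite linear_sum /=.
  by apply: eq_bigr => i _; rewrite comp_polyZ XsubC_comp.
have := congr1 (fun p : {poly CC} => p`_j) e2.
by rewrite -poly_def coef_poly hj coef0.
Qed.

Lemma shift_span (beta : CC) n (P : {poly CC}) : (size P <= n)%N ->
  exists d : nat -> CC, P = \sum_(j < n) d j *: ('X - beta%:P) ^+ j.
Proof.
move=> hs.
set P' := P \Po ('X + beta%:P).
have hs' : (size P' <= n)%N.
  by rewrite /P' size_comp_poly2 // size_XaddC.
exists (fun j => P'`_j).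
have eP : P = P' \Po ('X - beta%:P) by rewrite /P' comp_polyXaddC_K.
have eP' : P' = \sum_(j < n) P'`_j *: 'X ^+ j.
  rewrite -poly_def; apply/polyP => i; rewrite coef_poly.
  by case: ltnP => // hi; rewrite nth_default // (leq_trans hs' hi).
rewrite {1}eP {1}eP' linear_sum /=.
by apply: eq_bigr => i _; rewrite comp_polyZ rmorphXn /= comp_polyX.
Qed.

Definition Lfam (beta : CC) (n1 n2 : nat) (R : nat -> {poly CC}) : seq PP :=
  [seq (('X - beta%:P) ^+ j, 0) | j <- iota 0 n1] ++
  [seq (R j, ('X - beta%:P) ^+ j) | j <- iota 0 n2].

Lemma size_Lfam beta n1 n2 R : size (Lfam beta n1 n2 R) = (n1 + n2)%N.
Proof. by rewrite /Lfam size_cat !size_map !size_iota. Qed.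

Lemma nth_Lfam1 beta n1 n2 R i : (i < n1)%N ->
  nth (0, 0) (Lfam beta n1 n2 R) i = (('X - beta%:P) ^+ i, 0).
Proof.
move=> hi; rewrite /Lfam nth_cat size_map size_iota hi.
by rewrite (nth_map 0%N) ?size_iota // nth_iota.
Qed.

Lemma nth_Lfam2 beta n1 n2 R i : (i < n2)%N ->
  nth (0, 0) (Lfam beta n1 n2 R) (n1 + i) = (R i, ('X - beta%:P) ^+ i).
Proof.
move=> hi; rewrite /Lfam nth_cat size_map size_iota.
rewrite ltnNge leq_addr /= addKn.
by rewrite (nth_map 0%N) ?size_iota // nth_iota.
Qed.

Lemma sum_split (V : nmodType) n1 n2 (F : nat -> V) :
  \sum_(i < n1 + n2) F i = \sum_(i < n1) F i + \sum_(i < n2) F (n1 + i)%N.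
Proof.
rewrite -(big_mkord xpredT F) -(big_mkord xpredT F) -(big_mkord xpredT (fun i => F (n1 + i)%N)).
rewrite (big_cat_nat (leq0n n1) (leq_addr n2 n1)) /=.
rewrite -{2}(add0n n1) big_addn addKn; congr (_ + _).
by apply: eq_bigr => i _; rewrite addnC.
Qed.

Lemma sumL1 beta n1 n2 R (cn : nat -> CC) :
  \sum_(i < n1 + n2) cn i *: (nth (0, 0) (Lfam beta n1 n2 R) i).1 =
  \sum_(j < n1) cn j *: ('X - beta%:P) ^+ j + \sum_(j < n2) cn (n1 + j)%N *: R j.
Proof.
rewrite (sum_split n1 n2 (fun i => cn i *: (nth (0, 0) (Lfam beta n1 n2 R) i).1)).
congr (_ + _); apply: eq_bigr => i _.
  by rewrite nth_Lfam1.
by rewrite nth_Lfam2.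
Qed.

Lemma sumL2 beta n1 n2 R (cn : nat -> CC) :
  \sum_(i < n1 + n2) cn i *: (nth (0, 0) (Lfam beta n1 n2 R) i).2 =
  \sum_(j < n2) cn (n1 + j)%N *: ('X - beta%:P) ^+ j.
Proof.
rewrite (sum_split n1 n2 (fun i => cn i *: (nth (0, 0) (Lfam beta n1 n2 R) i).2)).
rewrite big1 ?add0r; last by move=> i _; rewrite nth_Lfam1 // scaler0.
by apply: eq_bigr => i _; rewrite nth_Lfam2.
Qed.

Lemma Phi_sum (f : {poly CC}) q n (c : 'I_n -> CC) (P Q : 'I_n -> {poly CC}) :
  (\sum_(i < n) rfc (c i) * (Phi f q (P i) (Q i)).1,
   \sum_(i < n) rfc (c i) * (Phi f q (P i) (Q i)).2) =
  Phi f q (\sum_(i < n) c i *: P i) (\sum_(i < n) c i *: Q i).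
Proof.
rewrite /Phi /ffmul /= /rf !rmorph_sum /=.
congr pair; rewrite !mulr_suml -big_split /=; apply: eq_bigr => i _;
  rewrite -!/(rf _) !rfZ; ring.
Qed.

Definition PhiL (f : {poly CC}) q (L : seq PP) : seq FF :=
  [seq Phi f q V.1 V.2 | V <- L].

Lemma ffcomb_map (f : {poly CC}) q (L : seq PP) (c : 'I_(size (PhiL f q L)) -> CC) :
  ffcomb c = Phi f q (\sum_(i < size (PhiL f q L)) c i *: (nth (0, 0) L i).1)
                     (\sum_(i < size (PhiL f q L)) c i *: (nth (0, 0) L i).2).
Proof.
rewrite /ffcomb -Phi_sum; congr pair; apply: eq_bigr => i _;
  rewrite /PhiL (nth_map (0, 0)) //; apply: leq_trans (ltn_ord i) _; by rewrite /PhiL size_map.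
Qed.

Lemma Phi_inj (f : {poly CC}) q P Q : f != 0 -> Phi f q P Q = (0, 0) -> P = 0 /\ Q = 0.
Proof.
move=> hf e.
have : ffmul f (Phi f q P Q) (ffexp f ffy q) = (rf P, rf Q).
  by rewrite /Phi -ffmulA ffyinvK // ffmulC ffmul1.
rewrite e /ffmul /= !mul0r !addr0 => [[h1 h2]].
by split; apply/eqP; rewrite -tofrac_eq0 -/(rf _) ?h1 ?h2 -?h1 -?h2.
Qed.

Lemma sum_ord_nat (V : nmodType) N (F : nat -> V) :
  \sum_(i < N) F i = \sum_(0 <= i < N) F i.
Proof. by rewrite big_mkord. Qed.

Lemma size_sum_le n1 n (e : nat -> CC) (R : nat -> {poly CC}) :
  (forall j, (size (R j) <= n1)%N) -> (size (\sum_(j < n) e j *: R j)%R <= n1)%N.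
Proof.
move=> hR; apply: (big_ind (fun p : {poly CC} => (size p <= n1)%N)).
- by rewrite size_poly0.
- by move=> p q hp hq; rewrite (leq_trans (size_polyD _ _)) // geq_max hp hq.
- by move=> i _; rewrite (leq_trans (size_scale_leq _ _)).
Qed.

Lemma basis_gen (f : {poly CC}) q beta n1 n2 (R : nat -> {poly CC}) :
  size f = 9%N -> separable_poly f -> n1 = (2 * q).+1 -> n2 = (2 * q - 3)%N ->
  (forall j, (size (R j) <= n1)%N) ->
  is_basis_H0 f q (PhiL f q (Lfam beta n1 n2 R)).
Proof.
move=> hs hsep hn1 hn2 hR.
have hf := f_neq0 hs.
have hN : size (PhiL f q (Lfam beta n1 n2 R)) = (n1 + n2)%N by rewrite size_map size_Lfam.
split; [|split].
- move=> g /mapP [V]; rewrite mem_cat => /orP [] /mapP [j]; rewrite mem_iota add0n => /andP [_ hj] -> ->;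
    apply: holo_of_form => //=; rewrite ?size_exp_XsubC ?size_poly0 -?hn1 -?hn2 //.
- move=> c hc.
  rewrite ffcomb_map in hc; have [h1 h2] := Phi_inj hf hc.
  pose cn := fun n : nat => oapp c 0 (insub n).
  have hcn : forall i, c i = cn i by move=> i; rewrite /cn valK.
  pose X1 := fun i : nat => cn i *: (nth (0, 0) (Lfam beta n1 n2 R) i).1.
  have e1 : \sum_(i < n1 + n2) X1 i = 0.
    rewrite (sum_ord_nat _ X1) -hN -(sum_ord_nat _ X1) -[RHS]h1; apply: eq_bigr => i _; by rewrite /X1 hcn.
  pose X2 := fun i : nat => cn i *: (nth (0, 0) (Lfam beta n1 n2 R) i).2.
  have e2 : \sum_(i < n1 + n2) X2 i = 0.
    rewrite (sum_ord_nat _ X2) -hN -(sum_ord_nat _ X2) -[RHS]h2; apply: eq_bigr => i _; by rewrite /X2 hcn.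
  rewrite /X2 sumL2 in e2; have z2 : forall j, (j < n2)%N -> cn (n1 + j)%N = 0 := @shift_indep beta n2 (fun j => cn (n1 + j)%N) e2.
  have hz : \sum_(j < n2) cn (n1 + j)%N *: R j = 0.
    by apply: big1 => j _; rewrite z2 // scale0r.
  rewrite /X1 sumL1 hz addr0 in e1.
  have z1 := @shift_indep beta n1 cn e1.
  move=> i; rewrite hcn.
  have hi : (i < n1 + n2)%N by rewrite -hN ltn_ord.
  case: (ltnP i n1) => hi1; first exact: z1.
  rewrite -(subnKC hi1); apply: z2; lia.
- move=> g hg.
  have [P [Q [hP hQ ->]]] := form_of_holo hs hsep hg.
  rewrite -hn2 in hQ; have [e he] := shift_span beta hQ.
  have hP' : (size (P - \sum_(j < n2) e j *: R j)%R <= n1)%N.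
    rewrite -hn1 in hP.
    by rewrite (leq_trans (size_polyD _ _)) // geq_max hP /= size_polyN size_sum_le.
  have [d hd] := shift_span beta hP'.
  pose cn := fun i : nat => if (i < n1)%N then d i else e (i - n1)%N.
  exists (fun i => cn i).
  rewrite ffcomb_map; congr (Phi f q _ _).
    pose Y1 := fun i : nat => cn i *: (nth (0, 0) (Lfam beta n1 n2 R) i).1.
    rewrite (sum_ord_nat _ Y1) hN -(sum_ord_nat _ Y1) /Y1 sumL1.
    have -> : \sum_(j < n1) cn j *: ('X - beta%:P) ^+ j = P - \sum_(j < n2) e j *: R j.
      by rewrite hd; apply: eq_bigr => j _; rewrite /cn ltn_ord.
    have -> : \sum_(j < n2) cn (n1 + j)%N *: R j = \sum_(j < n2) e j *: R j.
      by apply: eq_bigr => j _; rewrite /cn ltnNge leq_addr /= addKn.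
    by rewrite subrK.
  pose Y2 := fun i : nat => cn i *: (nth (0, 0) (Lfam beta n1 n2 R) i).2.
  rewrite (sum_ord_nat _ Y2) hN -(sum_ord_nat _ Y2) /Y2 sumL2 he; apply: eq_bigr => j _.
  by rewrite /cn ltnNge leq_addr /= addKn.
Qed.


Lemma bq_elt_Phi (f : {poly CC}) q beta j :
  bq_elt f q beta j = Phi f q (('X - beta%:P) ^+ j) 0.
Proof. by rewrite /bq_elt /Phi /ffpoly /ffX rf0. Qed.

Lemma bq_elt_y_Phi (f : {poly CC}) q beta j :
  bq_elt_y f q beta j = Phi f q 0 (('X - beta%:P) ^+ j).
Proof.
rewrite /bq_elt_y /Phi; congr ffmul.
rewrite /ffmul /ffpoly /ffX /ffy /= rf0; congr pair; ring.
Qed.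

Lemma B1_eq (f : {poly CC}) beta :
  B1 f beta = PhiL f 1 (Lfam beta 3 0 (fun _ => 0)).
Proof.
by rewrite /B1 /PhiL /Lfam map_cat -map_comp -[LHS]cats0; congr (_ ++ _).
Qed.

Lemma B2_eq (f : {poly CC}) beta b :
  B2 f beta b = PhiL f 2 (Lfam beta 5 1 (fun _ => - f_beta4 f beta b)).
Proof.
rewrite /B2 /PhiL /Lfam map_cat -map_comp; congr (_ ++ _).
rewrite /= /Phi expr0 rf1; congr [:: ffmul f _ _].
by rewrite /ffadd /ffy /ffpoly /ffX /= add0r addr0.
Qed.

Lemma Bq_eq (f : {poly CC}) q beta :
  Bq f q beta = PhiL f q (Lfam beta (2 * q).+1 (2 * q - 3) (fun _ => 0)).
Proof.
rewrite /Bq /PhiL /Lfam map_cat -!map_comp; congr (_ ++ _).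
by apply: eq_map => j; rewrite bq_elt_y_Phi.
Qed.

Lemma size_fbeta4 (f : {poly CC}) beta b : (size (- f_beta4 f beta b) <= 5)%N.
Proof.
rewrite size_polyN /f_beta4; case: ifP => _; first by rewrite size_poly0.
rewrite /taylor4_branch -ltnS.
have h := size_exp_XsubC 5 beta.
rewrite -h ltn_modpN0 // -size_poly_eq0 h.
by [].
Qed.

Theorem mainTheorem1 (f : {poly CC}) (hdeg : size f = 9%N)
    (hsep : separable_poly f) :
  (forall beta : CC, is_basis_H0 f 1 (B1 f beta)) /\
  (forall beta b : CC, (~~ root f beta -> b ^+ 2 = f.[beta]) ->
      is_basis_H0 f 2 (B2 f beta b)) /\
  (forall (q : nat) (beta : CC), (2 <= q)%N -> root f beta ->
      is_basis_H0 f q (Bq f q beta)).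
Proof.
split; [|split].
- move=> beta; rewrite B1_eq; apply: basis_gen => // j.
  by rewrite size_poly0.
- move=> beta b _; rewrite B2_eq; apply: basis_gen => // j.
  exact: size_fbeta4.
- move=> q beta _ _; rewrite Bq_eq; apply: basis_gen => // j.
  by rewrite size_poly0.
Qed.
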